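(* Let $\mathbf a:\mathbb R\to L^2(\mathbb R)$, $\mathbf a(\theta)(s)=\pi^{-1/4}e^{-\frac12(s-\theta)^2}$. Let $\theta_1\ne\theta_2$ be real, $c_1,c_2>0$, and $\mathbf y=c_1\mathbf a(\theta_1)+c_2\mathbf a(\theta_2)$. Then no maximizer of $\theta\mapsto|\langle\mathbf a(\theta),\mathbf y\rangle|$ over $\mathbb R$ belongs to $\{\theta_1,\theta_2\}$; in particular the first OMP iteration with input $\mathbf y$ selects a parameter outside $\{\theta_1,\theta_2\}$.
   Context: $\langle\cdot,\cdot\rangle$ is the $L^2(\mathbb R)$ inner product. The first OMP iteration with input $\mathbf y$ selects some $\widehat\theta_1\in\arg\max_\theta|\langle\mathbf a(\theta),\mathbf y\rangle|$. *)

(* Defs.v *)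
From Stdlib Require Import Reals Lra.
Open Scope R_scope.

Definition improper_int_R (f : R -> R) (l : R) : Prop :=
  forall eps : R, 0 < eps ->
    exists M : R, forall a b : R, a <= - M -> M <= b ->
      exists pr : Riemann_integrable f a b, Rabs (RiemannInt pr - l) < eps.

Definition L2_inner (f g : R -> R) (l : R) : Prop :=
  improper_int_R (fun s => f s * g s) l.

Definition atom (theta : R) (s : R) : R :=
  Rpower PI (-(1/4)) * exp (- (1/2) * (s - theta) ^ 2).

(* Main.v *)
Require Import Defs.
From Stdlib Require Import Reals Lra FunctionalExtensionality.
Open Scope R_scope.
From Stdlib Require Import Reals Lra.
From Coquelicot Require Import Coquelicot.
Open Scope R_scope.

Definition g (x : R) := exp (- (x * x)).

Lemma g_cont x : continuous g x.
Proof. apply (ex_derive_continuous (K:=R_AbsRing) (V:=R_NormedModule) g). unfold g. auto_derive. auto. Qed.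

Lemma g_ex a b : ex_RInt g a b.
Proof. apply (ex_RInt_continuous (V:=R_CompleteNormedModule)). intros; apply g_cont. Qed.

Lemma g_pos x : 0 < g x.
Proof. apply exp_pos. Qed.

Definition F b := RInt g 0 b.

Lemma F_bound b : 0 <= b -> F b <= exp 1 / 2.
Proof.
  intros Hb. unfold F.
  assert (Hh : is_RInt (fun x => exp (1 - 2 * x)) 0 b
     (minus ((fun x => - exp (1 - 2*x) / 2) b) ((fun x => - exp (1 - 2*x) / 2) 0))).
  { apply (is_RInt_derive (V:=R_CompleteNormedModule) (fun x => - exp (1 - 2*x) / 2)).
    - intros x _. auto_derive. auto. unfold Rminus. field.
    - intros y _. apply (ex_derive_continuous (K:=R_AbsRing) (V:=R_NormedModule)). auto_derive. auto. }
  apply Rle_trans with (RInt (fun x => exp (1 - 2 * x)) 0 b).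
  - apply RInt_le; auto. apply g_ex. eexists; exact Hh.
    intros x _. unfold g.
    destruct (Req_dec (- (x*x)) (1 - 2*x)) as [E|E]. rewrite E; lra.
    left. apply exp_increasing. assert (- (x*x) <= 1 - 2*x) by (pose proof (Rle_0_sqr (x-1)); unfold Rsqr in *; nra). lra.
  - rewrite (is_RInt_unique _ _ _ _ Hh). unfold minus, plus, opp; simpl.
    replace (1 - 2 * 0) with 1 by ring.
    pose proof (exp_pos (1 - 2*b)). lra.
Qed.

Lemma F_mono b c : 0 <= b -> b <= c -> F b <= F c.
Proof.
  intros Hb Hc. unfold F.
  rewrite <- (RInt_Chasles g 0 b c) by apply g_ex.
  unfold plus; simpl.
  assert (0 <= RInt g b c). { apply RInt_ge_0; auto. apply g_ex. intros; left; apply g_pos. }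
  lra.
Qed.

Lemma F_1 : exp (-1) <= F 1.
Proof.
  unfold F.
  replace (exp (-1)) with (RInt (fun _ => exp (-1)) 0 1).
  apply RInt_le; try lra. apply ex_RInt_const. apply g_ex.
  intros x Hx. unfold g.
  destruct (Req_dec (- (x*x)) (-1)) as [E|E]. rewrite E; lra.
  left. apply exp_increasing. assert (- (x*x) >= -1) by nra. lra.
  rewrite RInt_const. unfold scal; simpl; unfold mult; simpl. ring.
Qed.

Lemma g_sym a : RInt g a 0 = F (- a).
Proof.
  unfold F.
  pose proof (RInt_comp_lin g (-1) 0 a 0 (g_ex _ _)) as H.
  replace (-1 * a + 0) with (-a) in H by ring.
  replace (-1 * 0 + 0) with 0 in H by ring.
  rewrite (RInt_ext _ (fun y => -1 * g y)) in H.
  2:{ intros x _. unfold g. unfold scal; simpl; unfold mult; simpl. f_equal. f_equal. f_equal. ring. }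
  assert (H2 : RInt (fun y => -1 * g y) a 0 = -1 * RInt g a 0) by exact (RInt_scal g a 0 (-1) (g_ex a 0)).
  assert (H3 : - RInt g (-a) 0 = RInt g 0 (-a)) by exact (opp_RInt_swap g (-a) 0 (g_ex _ _)).
  rewrite <- H3, <- H, H2. assert (E: forall r : R, r = - (-1 * r)) by (intros; ring). apply E.
Qed.

Definition conv (f : R -> R) (l : R) := forall eps, 0 < eps ->
  exists M, forall a b, a <= - M -> M <= b -> Rabs (RInt f a b - l) < eps.

Lemma conv_g : exists G, 0 < G /\ conv g G.
Proof.
  set (E := fun y => exists b, 0 <= b /\ y = F b).
  assert (HB : bound E). { exists (exp 1 / 2). intros y [b [Hb ->]]. apply F_bound; auto. }
  assert (HE : exists x, E x). { exists (F 1). exists 1. split; [lra|auto]. }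
  destruct (completeness E HB HE) as [L [HL1 HL2]].
  exists (2 * L). split.
  { assert (F 1 <= L) by (apply HL1; exists 1; split; [lra|auto]).
    pose proof F_1. pose proof (exp_pos (-1)). lra. }
  intros eps Heps.
  assert (Hex : exists b0, 0 <= b0 /\ L - eps/2 < F b0).
  { apply Classical_Prop.NNPP. intros Hn.
    assert (L <= L - eps/2). { apply HL2. intros y [b [Hb ->]].
      apply Rnot_lt_le. intros Hc. apply Hn. exists b; auto. }
    lra. }
  destruct Hex as [b0 [Hb0 Hlt]].
  exists b0. intros a b Ha Hb.
  rewrite <- (RInt_Chasles g a 0 b) by apply g_ex.
  unfold plus; simpl. rewrite g_sym. fold (F b).
  assert (F (-a) <= L) by (apply HL1; exists (-a); split; [lra|auto]).
  assert (F b <= L) by (apply HL1; exists b; split; [lra|auto]).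
  assert (F b0 <= F (-a)) by (apply F_mono; lra).
  assert (F b0 <= F b) by (apply F_mono; lra).
  apply Rabs_def1; lra.
Qed.
Lemma conv_shift m G : conv g G -> conv (fun s => g (s - m)) G.
Proof.
  intros HG eps Heps. destruct (HG eps Heps) as [M HM].
  exists (M + Rabs m). intros a b Ha Hb.
  assert (E : RInt (fun s => g (s - m)) a b = RInt g (a - m) (b - m)).
  { pose proof (RInt_comp_lin g 1 (-m) a b (g_ex _ _)) as H.
    replace (1 * a + - m) with (a - m) in H by ring.
    replace (1 * b + - m) with (b - m) in H by ring.
    rewrite <- H. apply RInt_ext. intros x _.
    unfold scal; simpl; unfold mult; simpl. rewrite Rmult_1_l. f_equal. ring. }
  rewrite E. apply HM.
  - pose proof (Rle_abs m). pose proof (Rle_abs (-m)). rewrite Rabs_Ropp in *. lra.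
  - pose proof (Rle_abs m). pose proof (Rle_abs (-m)). rewrite Rabs_Ropp in *. lra.
Qed.

Lemma g_shift_ex m a b : ex_RInt (fun s => g (s - m)) a b.
Proof.
  apply (ex_RInt_continuous (V:=R_CompleteNormedModule)). intros z _.
  apply (ex_derive_continuous (K:=R_AbsRing) (V:=R_NormedModule)). unfold g. auto_derive. auto.
Qed.

Lemma conv_lin f1 f2 l1 l2 k1 k2 :
  (forall a b, ex_RInt f1 a b) -> (forall a b, ex_RInt f2 a b) ->
  conv f1 l1 -> conv f2 l2 -> conv (fun s => k1 * f1 s + k2 * f2 s) (k1 * l1 + k2 * l2).
Proof.
  intros E1 E2 H1 H2 eps Heps.
  set (K := Rabs k1 + Rabs k2 + 1).
  assert (HK : 0 < K) by (unfold K; pose proof (Rabs_pos k1); pose proof (Rabs_pos k2); lra).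
  destruct (H1 (eps / K)) as [M1 HM1]. apply Rdiv_lt_0_compat; auto.
  destruct (H2 (eps / K)) as [M2 HM2]. apply Rdiv_lt_0_compat; auto.
  exists (Rmax M1 M2). intros a b Ha Hb.
  assert (E : RInt (fun s => k1 * f1 s + k2 * f2 s) a b = k1 * RInt f1 a b + k2 * RInt f2 a b).
  { assert (A1 : RInt (fun s => k1 * f1 s) a b = k1 * RInt f1 a b) by exact (RInt_scal f1 a b k1 (E1 a b)).
    assert (A2 : RInt (fun s => k2 * f2 s) a b = k2 * RInt f2 a b) by exact (RInt_scal f2 a b k2 (E2 a b)).
    assert (A3 : RInt (fun s => k1 * f1 s + k2 * f2 s) a b = RInt (fun s => k1 * f1 s) a b + RInt (fun s => k2 * f2 s) a b).
    { exact (RInt_plus (fun s => k1 * f1 s) (fun s => k2 * f2 s) a b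
        (ex_RInt_scal f1 a b k1 (E1 a b)) (ex_RInt_scal f2 a b k2 (E2 a b))). }
    rewrite A3, A1, A2. reflexivity. }
  rewrite E.
  assert (B1 : Rabs (RInt f1 a b - l1) < eps / K).
  { apply HM1. pose proof (Rmax_l M1 M2); lra. pose proof (Rmax_l M1 M2); lra. }
  assert (B2 : Rabs (RInt f2 a b - l2) < eps / K).
  { apply HM2. pose proof (Rmax_r M1 M2); lra. pose proof (Rmax_r M1 M2); lra. }
  replace (k1 * RInt f1 a b + k2 * RInt f2 a b - (k1 * l1 + k2 * l2))
    with (k1 * (RInt f1 a b - l1) + k2 * (RInt f2 a b - l2)) by ring.
  eapply Rle_lt_trans. apply Rabs_triang. rewrite !Rabs_mult.
  assert (Rabs k1 * Rabs (RInt f1 a b - l1) <= Rabs k1 * (eps / K))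
    by (apply Rmult_le_compat_l; [apply Rabs_pos|lra]).
  assert (Rabs k2 * Rabs (RInt f2 a b - l2) <= Rabs k2 * (eps / K))
    by (apply Rmult_le_compat_l; [apply Rabs_pos|lra]).
  assert (Rabs k1 * (eps / K) + Rabs k2 * (eps / K) < eps).
  { replace (Rabs k1 * (eps / K) + Rabs k2 * (eps / K)) with ((Rabs k1 + Rabs k2) * (eps / K)) by ring.
    apply Rlt_le_trans with (K * (eps / K)). apply Rmult_lt_compat_r.
    apply Rdiv_lt_0_compat; auto. unfold K; lra. right; field; lra. }
  lra.
Qed.
Lemma conv_imp f l : (forall a b, ex_RInt f a b) -> conv f l -> improper_int_R f l.
Proof.
  intros E H eps Heps. destruct (H eps Heps) as [M HM]. exists M. intros a b Ha Hb.
  exists (ex_RInt_Reals_0 _ _ _ (E a b)). rewrite <- RInt_Reals. apply HM; auto.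
Qed.

Definition P := Rpower PI (-(1/4)).

Lemma P_pos : 0 < P.
Proof. unfold P, Rpower. apply exp_pos. Qed.

Lemma atom_prod t t' s : atom t s * atom t' s = (P * P * exp (- (t - t') ^ 2 / 4)) * g (s - (t + t') / 2).
Proof.
  unfold atom, g. fold P.
  replace (P * exp (- (1 / 2) * (s - t) ^ 2) * (P * exp (- (1 / 2) * (s - t') ^ 2)))
    with (P * P * (exp (- (1 / 2) * (s - t) ^ 2) * exp (- (1 / 2) * (s - t') ^ 2))) by ring.
  rewrite <- exp_plus.
  replace (P * P * exp (- (t - t') ^ 2 / 4) * exp (- ((s - (t + t') / 2) * (s - (t + t') / 2))))
    with (P * P * (exp (- (t - t') ^ 2 / 4) * exp (- ((s - (t + t') / 2) * (s - (t + t') / 2))))) by ring.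
  rewrite <- exp_plus. f_equal. f_equal. field.
Qed.

Definition phi t1 t2 k1 k2 t := k1 * exp (- (t - t1) ^ 2 / 4) + k2 * exp (- (t - t2) ^ 2 / 4).

Lemma phi_pos t1 t2 k1 k2 t : 0 < k1 -> 0 < k2 -> 0 < phi t1 t2 k1 k2 t.
Proof.
  intros. unfold phi. pose proof (exp_pos (- (t - t1) ^ 2 / 4)). pose proof (exp_pos (- (t - t2) ^ 2 / 4)).
  pose proof (Rmult_lt_0_compat _ _ H H1). pose proof (Rmult_lt_0_compat _ _ H0 H2). lra.
Qed.

Lemma key t1 t2 k1 k2 : t1 <> t2 -> 0 < k2 -> exists t, phi t1 t2 k1 k2 t1 < phi t1 t2 k1 k2 t.
Proof.
  intros Hne Hk.
  set (D := k2 * exp (- (t1 - t2) ^ 2 / 4) * (- (t1 - t2) / 2)).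
  assert (HD : is_derive (phi t1 t2 k1 k2) t1 D).
  { unfold phi, D. auto_derive. auto.
    replace (- ((t1 + - t2) * ((t1 + - t2) * 1)) * / 4) with (-(t1-t2)^2/4) by (unfold Rminus, Rdiv; ring).
    replace (t1 + - t1) with 0 by ring. unfold Rminus. field. }
  apply is_derive_Reals in HD.
  assert (HD0 : D <> 0).
  { unfold D. pose proof (exp_pos (- (t1 - t2) ^ 2 / 4)).
    assert (t1 - t2 <> 0) by lra.
    apply Rmult_integral_contrapositive_currified.
    apply Rmult_integral_contrapositive_currified; lra. lra. }
  assert (He : 0 < Rabs D / 2) by (pose proof (Rabs_pos_lt D HD0); lra).
  destruct (HD _ He) as [delta Hdelta].
  pose proof (cond_pos delta) as Hdp.
  destruct (Rlt_or_le 0 D) as [Dp|Dn].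
  - exists (t1 + delta / 2).
    assert (Hq := Hdelta (delta / 2) ltac:(lra) ltac:(rewrite Rabs_pos_eq; lra)).
    rewrite Rabs_pos_eq in He by lra.
    set (q := (phi t1 t2 k1 k2 (t1 + delta / 2) - phi t1 t2 k1 k2 t1) / (delta / 2)) in Hq.
    assert (0 < q) by (apply Rabs_def2 in Hq; rewrite Rabs_pos_eq in Hq by lra; lra).
    assert (phi t1 t2 k1 k2 (t1 + delta / 2) - phi t1 t2 k1 k2 t1 = q * (delta / 2)) by (unfold q; field; lra).
    pose proof (Rmult_lt_0_compat q (delta/2) H ltac:(lra)). lra.
  - exists (t1 + - (delta / 2)).
    assert (Hq := Hdelta (- (delta / 2)) ltac:(lra) ltac:(rewrite Rabs_Ropp, Rabs_pos_eq; lra)).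
    assert (Dneg : D < 0) by (destruct Dn; [lra|contradiction]).
    set (q := (phi t1 t2 k1 k2 (t1 + - (delta / 2)) - phi t1 t2 k1 k2 t1) / (- (delta / 2))) in Hq.
    rewrite (Rabs_left D) in He, Hq by lra.
    assert (q < 0) by (apply Rabs_def2 in Hq; destruct Hq; lra).
    assert (phi t1 t2 k1 k2 (t1 + - (delta / 2)) - phi t1 t2 k1 k2 t1 = q * (- (delta / 2))) by (unfold q; field; lra).
    assert (0 < q * (- (delta / 2))) by nra. 
    lra.
Qed.

Lemma inner_val t t1 t2 c1 c2 G : conv g G ->
  L2_inner (atom t) (fun s => c1 * atom t1 s + c2 * atom t2 s) (P * P * G * phi t1 t2 c1 c2 t).
Proof.
  intros HG. unfold L2_inner.
  set (k1 := c1 * (P * P * exp (- (t - t1) ^ 2 / 4))).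
  set (k2 := c2 * (P * P * exp (- (t - t2) ^ 2 / 4))).
  replace (fun s => atom t s * (c1 * atom t1 s + c2 * atom t2 s))
    with (fun s => k1 * g (s - (t + t1) / 2) + k2 * g (s - (t + t2) / 2)).
  2:{ apply functional_extensionality. intros s.
      rewrite Rmult_plus_distr_l.
      replace (atom t s * (c1 * atom t1 s)) with (c1 * (atom t s * atom t1 s)) by ring.
      replace (atom t s * (c2 * atom t2 s)) with (c2 * (atom t s * atom t2 s)) by ring.
      rewrite !atom_prod. unfold k1, k2. ring. }
  replace (P * P * G * phi t1 t2 c1 c2 t) with (k1 * G + k2 * G) by (unfold k1, k2, phi; ring).
  apply conv_imp.
  - intros a b. apply (ex_RInt_plus (V:=R_NormedModule) (fun s => k1 * g (s - (t + t1) / 2)) (fun s => k2 * g (s - (t + t2) / 2))).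
    apply (ex_RInt_scal (V:=R_NormedModule) (fun s => g (s - (t + t1) / 2))). apply g_shift_ex.
    apply (ex_RInt_scal (V:=R_NormedModule) (fun s => g (s - (t + t2) / 2))). apply g_shift_ex.
  - apply (conv_lin (fun s => g (s - (t + t1) / 2)) (fun s => g (s - (t + t2) / 2))).
    apply g_shift_ex. apply g_shift_ex. apply conv_shift; auto. apply conv_shift; auto.
Qed.

Theorem mainTheorem15 (th1 th2 c1 c2 : R) :
  th1 <> th2 -> 0 < c1 -> 0 < c2 ->
  forall thstar : R, thstar = th1 \/ thstar = th2 ->
    exists (theta l lstar : R),
      L2_inner (atom theta) (fun s => c1 * atom th1 s + c2 * atom th2 s) l /\
      L2_inner (atom thstar) (fun s => c1 * atom th1 s + c2 * atom th2 s) lstar /\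
      Rabs lstar < Rabs l.
Proof.
  intros Hne H1 H2 thstar Hst.
  destruct conv_g as [G [HGp HG]].
  assert (HK : 0 < P * P * G) by (pose proof P_pos; apply Rmult_lt_0_compat; [apply Rmult_lt_0_compat|]; auto).
  assert (Hsw : forall x, phi th1 th2 c1 c2 x = phi th2 th1 c2 c1 x) by (intros; unfold phi; ring).
  assert (Hex : exists t, phi th1 th2 c1 c2 thstar < phi th1 th2 c1 c2 t).
  { destruct Hst as [-> | ->].
    - apply key; auto.
    - destruct (key th2 th1 c2 c1) as [t Ht]; auto. exists t. rewrite !Hsw. auto. }
  destruct Hex as [t Ht].
  exists t, (P * P * G * phi th1 th2 c1 c2 t), (P * P * G * phi th1 th2 c1 c2 thstar).
  split; [apply inner_val; auto|]. split; [apply inner_val; auto|].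
  pose proof (phi_pos th1 th2 c1 c2 t H1 H2). pose proof (phi_pos th1 th2 c1 c2 thstar H1 H2).
  rewrite !Rabs_pos_eq.
  apply Rmult_lt_compat_l; auto.
  left; apply Rmult_lt_0_compat; auto.
  left; apply Rmult_lt_0_compat; auto.
Qed.
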